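(* Consider the caching network and the backhaul-eavesdropper scenario $S_1$ described in the context, and assume every user is served by exactly one SBS, i.e., $\gamma_1=1$. For a placement $\mathbf{m}=(m_1,\dots,m_N)$ of integers $0\le m_j\le n$, if $m_j > n\left(1-\frac{1}{Q p_j}\right)$ for every $j=1,\dots,N$, then the network is secure in scenario $S_1$.
   Context: A macro base station (MBS) has access to a library of $N$ files $F_1,\dots,F_N$; file $F_j$ is requested with probability $p_j>0$, $\sum_j p_j=1$. There are $N_{\text{SBS}}$ small-cell base stations (SBSs), each with a cache. Each file is split into $n$ fragments and encoded with a code such that any $n$ distinct encoded packets of a file suffice to recover it, while fewer than $n$ distinct packets do not allow recovery of the file. A placement $\mathbf{m}$ means each SBS stores $m_j$ encoded packets of $F_j$, with packets stored at different SBSs all distinct. A user is served by exactly $d$ SBSs with probability $\gamma_d$, $d=1,\dots,S$ ($\gamma_d\ge0$, $\sum_d\gamma_d=1$, $S$ the maximum number of SBSs serving a user). A user requesting $F_j$ and served by $d$ SBSs receives $d m_j$ distinct packets from them, and the MBS sends the missing $n(1-\min(1,d m_j/n))$ new distinct packets over the backhaul. Scenario $S_1$: each SBS receives $Q$ requests during delivery, $Q p_j$ of them for $F_j$; an eavesdropper intercepts all packets sent over one MBS-to-SBS link, collecting $P_j=\sum_{d=1}^{S} Q\gamma_d p_j\, n(1-\min(1,d m_j/n))$ distinct packets of $F_j$. The network is secure in scenario $S_1$ if $P_j<n$ for all $j$. *)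

(* Defs.v *)
From Stdlib Require Import Reals Lra Lia.
Open Scope R_scope.

(* Number of packets the MBS sends over the backhaul for a user requesting a
   file with m stored packets per SBS, served by d SBSs, code length n:
   n (1 - min(1, d m / n)). *)
Definition backhaul_packets (n : nat) (d : nat) (mj : nat) : R :=
  INR n * (1 - Rmin 1 (INR d * INR mj / INR n)).

Definition P_S1 (n S : nat) (Q : R) (gamma : nat -> R) (p : nat -> R)
    (m : nat -> nat) (j : nat) : R :=
  sum_f 1 S (fun d => Q * gamma d * p j * backhaul_packets n d (m j)).

Definition secure_S1 (N n S : nat) (Q : R) (gamma : nat -> R)
    (p : nat -> R) (m : nat -> nat) : Prop :=
  forall j : nat, (1 <= j <= N)%nat -> P_S1 n S Q gamma p m j < INR n.

(* Main.v *)
Require Import Defs.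
From Stdlib Require Import Reals Lra Lia.
Open Scope R_scope.

Theorem corollary1
  (N n S : nat) (Q : R) (p : nat -> R) (gamma : nat -> R) (m : nat -> nat)
  (hN : (1 <= N)%nat) (hn : (1 <= n)%nat) (hS : (1 <= S)%nat) (hQ : 0 < Q)
  (hp_pos : forall j, (1 <= j <= N)%nat -> 0 < p j)
  (hp_sum : sum_f 1 N p = 1)
  (hgamma_nonneg : forall d, (1 <= d <= S)%nat -> 0 <= gamma d)
  (hgamma_sum : sum_f 1 S gamma = 1)
  (hgamma1 : gamma 1%nat = 1)
  (hm_le : forall j, (1 <= j <= N)%nat -> (m j <= n)%nat)
  (hm : forall j, (1 <= j <= N)%nat -> INR (m j) > INR n * (1 - 1 / (Q * p j))) :
  secure_S1 N n S Q gamma p m.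
Proof.
  intros j Hj.
  pose proof (hp_pos j Hj) as Hp.
  pose proof (hm j Hj) as Hmj.
  pose proof (hm_le j Hj) as Hle.
  apply le_INR in Hle.
  assert (Hn : 1 <= INR n) by (apply (le_INR 1); lia).
  assert (Hm0 : 0 <= INR (m j)) by apply pos_INR.
  set (c := INR n - INR (m j)).
  assert (Hc : 0 <= c) by (unfold c; lra).
  assert (Hterm : forall d, (1 <= d <= S)%nat ->
    Q * gamma d * p j * backhaul_packets n d (m j) <= gamma d * (Q * p j * c)).
  { intros d Hd. unfold backhaul_packets.
    assert (Hd1 : 1 <= INR d) by (apply (le_INR 1); lia).
    assert (Hg := hgamma_nonneg d Hd).
    assert (Hr : INR (m j) / INR n <= 1).
    { apply (Rmult_le_reg_r (INR n)); [lra|]. field_simplify; lra. }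
    assert (Hr0 : 0 <= INR (m j) / INR n).
    { unfold Rdiv; apply Rmult_le_pos; [lra| left; apply Rinv_0_lt_compat; lra]. }
    assert (Hdm : INR (m j) / INR n <= INR d * INR (m j) / INR n).
    { unfold Rdiv. rewrite Rmult_assoc. 
      assert (0 <= INR (m j) * / INR n) by (apply Rmult_le_pos; [lra| left; apply Rinv_0_lt_compat; lra]).
      nra. }
    assert (Hmin : INR n * (1 - Rmin 1 (INR d * INR (m j) / INR n)) <= c).
    { unfold c. unfold Rmin. destruct (Rle_dec 1 (INR d * INR (m j) / INR n)).
      - lra.
      - assert (INR n * (INR d * INR (m j) / INR n) >= INR n * (INR (m j) / INR n)) by nra.
        replace (INR n * (INR (m j) / INR n)) with (INR (m j)) in H by (field; lra).
        nra. }
    assert (0 <= Q * gamma d * p j) by (apply Rmult_le_pos; [apply Rmult_le_pos|]; lra).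
    replace (gamma d * (Q * p j * c)) with (Q * gamma d * p j * c) by ring.
    apply Rmult_le_compat_l; [assumption|lra]. }
  apply Rle_lt_trans with (Q * p j * c).
  - unfold P_S1.
    apply Rle_trans with (sum_f 1 S (fun d => gamma d * (Q * p j * c))).
    + unfold sum_f. apply sum_Rle. intros k Hk. apply Hterm. lia.
    + unfold sum_f. unfold sum_f in hgamma_sum.
      rewrite <- (scal_sum (fun i => gamma (i + 1)%nat) (S - 1) (Q * p j * c)).
      rewrite hgamma_sum. lra.
  - unfold c. 
    assert (Hqp : 0 < Q * p j) by nra.
    assert (INR n * (1 - 1 / (Q * p j)) * (Q * p j) = INR n * (Q * p j) - INR n)
      by (field; lra).
    nra.
Qed.
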